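(* Let $\mathcal{X}$ and $\mathcal{Y}$ be finite sets, let $\Pr$ be a probability distribution on $\mathcal{X}$, let $\delta:\mathcal{X}\times\mathcal{Y}\to\mathbb{R}$, and let $\bar\pi,\pi_1,\dots,\pi_m$ be stochastic policies. Let $\mathcal{D}=\bigcup_{i=1}^m\mathcal{D}^i$ be a log dataset in which, for each $i$, $\mathcal{D}^i$ consists of $n_i$ samples $(x^i_j,y^i_j,\delta^i_j,p^i_j)$, $j=1,\dots,n_i$, where $x^i_j\sim\Pr$, $y^i_j\sim\pi_i(\cdot\mid x^i_j)$, $\delta^i_j=\delta(x^i_j,y^i_j)$, $p^i_j=\pi_i(y^i_j\mid x^i_j)$, all draws independent; let $n=\sum_i n_i$ and define the policy $\pi_{avg}(y\mid x)=\frac1n\sum_{i=1}^m n_i\pi_i(y\mid x)$. Assume $\pi_{avg}$ has support for $\bar\pi$. Then the balanced IPS estimator $$\hat U_{bal}(\bar\pi)=\frac1n\sum_{i=1}^m\sum_{j=1}^{n_i}\delta^i_j\,\frac{\bar\pi(y^i_j\mid x^i_j)}{\pi_{avg}(y^i_j\mid x^i_j)}$$ is unbiased: $\mathbb{E}_{\mathcal{D}}[\hat U_{bal}(\bar\pi)]=U(\bar\pi)$.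
   Context: A stochastic policy $\pi$ assigns to each $x\in\mathcal{X}$ a probability distribution $\pi(\cdot\mid x)$ on $\mathcal{Y}$. The utility of a policy is $U(\pi)=\sum_{x\in\mathcal{X},y\in\mathcal{Y}}\Pr(x)\pi(y\mid x)\delta(x,y)$. A policy $\pi$ has support for a policy $\pi'$ if for all $x\in\mathcal{X},y\in\mathcal{Y}$, $\delta(x,y)\pi'(y\mid x)\neq0$ implies $\pi(y\mid x)>0$. *)

(* Defs.v *)
From mathcomp Require Import all_boot all_order all_algebra.
Set Implicit Arguments. Unset Strict Implicit. Unset Printing Implicit Defensive.
Import Order.TTheory GRing.Theory Num.Theory.
Local Open Scope ring_scope.

Section Defs.
Variables (R : realFieldType) (X Y : finType).

Definition is_distr (Pr : X -> R) : Prop :=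
  (forall x, 0 <= Pr x) /\ \sum_(x : X) Pr x = 1.

(* a stochastic policy: pi x y = pi(y | x) *)
Definition is_policy (pi : X -> Y -> R) : Prop :=
  forall x, (forall y, 0 <= pi x y) /\ \sum_(y : Y) pi x y = 1.

Definition utility (Pr : X -> R) (delta : X -> Y -> R) (pi : X -> Y -> R) : R :=
  \sum_(x : X) \sum_(y : Y) Pr x * pi x y * delta x y.

Definition has_support (delta : X -> Y -> R) (pi pi' : X -> Y -> R) : Prop :=
  forall x y, delta x y * pi' x y != 0 -> 0 < pi x y.

Variables (m : nat) (ns : 'I_m -> nat).

Definition ntot : nat := \sum_(i < m) ns i.

Definition pi_avg (pis : 'I_m -> X -> Y -> R) : X -> Y -> R :=
  fun x y => (ntot%:R)^-1 * \sum_(i < m) (ns i)%:R * pis i x y.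

Definition sample_idx : finType := {i : 'I_m & 'I_(ns i)}.

(* a log dataset: for each sample index, the pair (x^i_j, y^i_j);
   delta^i_j = delta x y and p^i_j = pi_i(y|x) are determined by it *)
Definition dataset := {ffun sample_idx -> X * Y}.

Definition dataset_prob (Pr : X -> R) (pis : 'I_m -> X -> Y -> R)
  (D : dataset) : R :=
  \prod_(s : sample_idx) (Pr (D s).1 * pis (tag s) (D s).1 (D s).2).

Definition expect_log (Pr : X -> R) (pis : 'I_m -> X -> Y -> R)
  (f : dataset -> R) : R :=
  \sum_(D : dataset) dataset_prob Pr pis D * f D.

Definition U_bal (delta : X -> Y -> R) (pibar : X -> Y -> R)
  (pis : 'I_m -> X -> Y -> R) (D : dataset) : R :=
  (ntot%:R)^-1 * \sum_(s : sample_idx)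
     delta (D s).1 (D s).2 * (pibar (D s).1 (D s).2 / pi_avg pis (D s).1 (D s).2).

End Defs.
Arguments dataset_prob {R X Y m} ns Pr pis D.
Arguments expect_log {R X Y m} ns Pr pis f.
Arguments U_bal {R X Y m} ns delta pibar pis D.
Arguments pi_avg {R X Y m} ns pis x y.

(* Main.v *)
Require Import Defs.
From mathcomp Require Import all_boot all_order all_algebra ring.
Import Order.TTheory GRing.Theory Num.Theory.
Local Open Scope ring_scope.

Lemma marg (R : realFieldType) (X Y : finType) (Pr : X -> R)
  (m : nat) (ns : 'I_m -> nat) (pis : 'I_m -> X -> Y -> R) :
  is_distr Pr -> (forall i, is_policy (pis i)) ->
  forall (s0 : sample_idx ns) (g : X * Y -> R),
  \sum_(D : dataset X Y ns) dataset_prob ns Pr pis D * g (D s0) =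
  \sum_(z : X * Y) Pr z.1 * pis (tag s0) z.1 z.2 * g z.
Proof.
move=> [_ HPr] Hpi s0 g.
pose F (s : sample_idx ns) (z : X * Y) :=
  Pr z.1 * pis (tag s) z.1 z.2 * (if s == s0 then g z else 1).
have E : forall D : dataset X Y ns,
    dataset_prob ns Pr pis D * g (D s0) = \prod_s F s (D s).
  move=> D; rewrite /dataset_prob (bigD1 s0) //= [RHS](bigD1 s0) //=.
  rewrite /F eqxx.
  rewrite [X in _ = _ * X](eq_bigr (fun s => Pr (D s).1 * pis (tag s) (D s).1 (D s).2)); last first.
    by move=> s Hs; rewrite (negbTE Hs) mulr1.
  by rewrite mulrAC.
rewrite (eq_bigr _ (fun D _ => E D)) -(bigA_distr_bigA (fun s z => F s z)).
have H1 : forall i, \sum_(z : X * Y) Pr z.1 * pis i z.1 z.2 = 1.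
  move=> i; rewrite -(pair_big xpredT xpredT (fun x y => Pr x * pis i x y)) /=.
  rewrite -HPr; apply: eq_bigr => x _; rewrite -mulr_sumr.
  by case: (Hpi i x) => _ ->; rewrite mulr1.
rewrite (bigD1 s0) //= [X in _ * X = _]big1 ?mulr1.
  by apply: eq_bigr => z _; rewrite /F eqxx.
move=> s Hs.
rewrite -(H1 (tag s)); apply: eq_bigr => z _; by rewrite /F (negbTE Hs) mulr1.
Qed.

Theorem proposition5p2 (R : realFieldType) (X Y : finType)
  (Pr : X -> R) (delta : X -> Y -> R) (pibar : X -> Y -> R)
  (m : nat) (ns : 'I_m -> nat) (pis : 'I_m -> X -> Y -> R) :
  is_distr Pr ->
  is_policy pibar ->
  (forall i, is_policy (pis i)) ->
  has_support delta (pi_avg ns pis) pibar ->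
  expect_log ns Pr pis (U_bal ns delta pibar pis) = utility Pr delta pibar.
Proof.
move=> HPr Hbar Hpi Hsup.
pose t (z : X * Y) := delta z.1 z.2 * (pibar z.1 z.2 / pi_avg ns pis z.1 z.2).
rewrite /expect_log /U_bal.
under eq_bigr => D _ do rewrite mulrCA mulr_sumr.
rewrite -mulr_sumr exchange_big /=.
under eq_bigr => s _ do rewrite (@marg R X Y Pr m ns pis HPr Hpi s t).
rewrite exchange_big /=.
have Hs : forall z : X * Y,
   \sum_(s : sample_idx ns) Pr z.1 * pis (tag s) z.1 z.2 * t z
   = (\sum_(i < m) (ns i)%:R * pis i z.1 z.2) * (Pr z.1 * t z).
  move=> z.
  rewrite -(sig_big_dep xpredT (fun i (_ : 'I_(ns i)) => true)
     (fun i (_ : 'I_(ns i)) => Pr z.1 * pis i z.1 z.2 * t z)) /=.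
  rewrite mulr_suml; apply: eq_bigr => i _.
  by rewrite sumr_const card_ord -mulr_natl; ring.
under eq_bigr => z _ do rewrite Hs.
have Hn : ((ntot ns)%:R : R) = 0 \/ ((ntot ns)%:R : R) != 0.
  by case: eqP; [left|right].
rewrite /utility pair_big /=.
case: Hn => Hn.
  rewrite Hn invr0 mul0r; symmetry; apply: big1 => z _.
  have : delta z.1 z.2 * pibar z.1 z.2 = 0.
    apply/eqP; apply: contraT => /(Hsup z.1 z.2).
    by rewrite /pi_avg Hn invr0 mul0r ltxx.
  by move=> H; rewrite -mulrA [pibar _ _ * _]mulrC H mulr0.
rewrite mulr_sumr; apply: eq_bigr => z _.
have Ha : (\sum_(i < m) (ns i)%:R * pis i z.1 z.2) = (ntot ns)%:R * pi_avg ns pis z.1 z.2.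
  by rewrite /pi_avg mulrA mulfV // mul1r.
rewrite Ha /t.
case: (eqVneq (pi_avg ns pis z.1 z.2) 0) => Hp.
  have : delta z.1 z.2 * pibar z.1 z.2 = 0.
    apply/eqP; apply: contraT => /(Hsup z.1 z.2).
    by rewrite Hp ltxx.
  by move=> H; rewrite Hp invr0 !mulr0 -mulrA [pibar _ _ * _]mulrC H mulr0.
rewrite [LHS](_ : _ = Pr z.1 * pibar z.1 z.2 * delta z.1 z.2 *
   (((ntot ns)%:R)^-1 * (ntot ns)%:R) * (pi_avg ns pis z.1 z.2 * (pi_avg ns pis z.1 z.2)^-1)); last by ring.
by rewrite mulVf // mulfV // !mulr1.
Qed.
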